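(* The following hold. (1) If $\mathbf v_0,\mathbf v_1\in\Lambda_q$ and $\mathbf v_0\neq\pm\mathbf v_1$, then $|\mathbf v_0\wedge\mathbf v_1|\ge1$. (2) Let $\mathbf v\in\mathbb R^2\setminus\{0\}$ be not parallel to any vector of $\Lambda_q$, and let $\mathbf u_0,\mathbf u_1\in\Lambda_q$ with $\mathbf u_0\wedge\mathbf u_1=1$ and $\mathbf v\in\{\alpha\mathbf u_0+\beta\mathbf u_1:\alpha,\beta>0\}$. Then there exist grandchildren $\mathbf w_0,\mathbf w_1$ of $\mathbf u_0,\mathbf u_1$ with $\mathbf w_0\wedge\mathbf w_1=1$, $\{\mathbf w_0,\mathbf w_1\}\neq\{\mathbf u_0,\mathbf u_1\}$, and $\mathbf v\in\{\alpha\mathbf w_0+\beta\mathbf w_1:\alpha,\beta>0\}$. (3) Let $\mathbf u_0,\mathbf u_1\in\Lambda_q$ with $\mathbf u_0\wedge\mathbf u_1=1$, and let $(\mathbf w_n)_{n\ge1}$ be any sequence such that for each $n$, $\mathbf w_n$ is generated at stage $n$ of the $G_q$-Stern–Brocot process started from $(\mathbf u_0,\mathbf u_1)$. Then $\|\mathbf w_n\|\to\infty$. (4) The set of slopes $y/x$ of vectors $(x,y)^T\in\Lambda_q$ with $x\neq0$ is dense in $\mathbb R$.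
   Context: Fix an integer $q\ge3$, let $\lambda_q=2\cos(\pi/q)$, and let $G_q\subset \mathrm{SL}(2,\mathbb R)$ be the Hecke triangle group generated by $S=\begin{pmatrix}0&-1\\1&0\end{pmatrix}$ and $T_q=\begin{pmatrix}1&\lambda_q\\0&1\end{pmatrix}$, acting linearly on $\mathbb R^2$. Set $\Lambda_q=G_q(1,0)^T$. Let $U_q=T_qS$ and $(x_j^q,y_j^q)^T=U_q^j(1,0)^T$. Wedge product: $(x_0,y_0)^T\wedge(x_1,y_1)^T=x_0y_1-x_1y_0$. The $G_q$-Stern–Brocot process started from a pair $\mathbf u_0,\mathbf u_1\in\Lambda_q$ with $\mathbf u_0\wedge\mathbf u_1=1$: set $L_0=(\mathbf u_0,\mathbf u_1)$ and obtain $L_{n+1}$ from the list $L_n$ by replacing each consecutive pair $(\mathbf v,\mathbf w)$ with $x_j^q\mathbf v+y_j^q\mathbf w$, $j=0,\dots,q-1$. A vector is generated at stage $n\ge1$ if it appears in $L_n$ but not in $L_{n-1}$; grandchildren of $\mathbf u_0,\mathbf u_1$ are the vectors generated at some stage $n\ge1$. *)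

(* Defs.v *)
From Stdlib Require Import Reals Lra List.
Import ListNotations.
Open Scope R_scope.

Definition vec := (R * R)%type.
(* 2x2 matrix ((a,b),(c,d)) = [[a,b],[c,d]] *)
Definition mat := ((R * R) * (R * R))%type.

Definition lam (q : nat) : R := 2 * cos (PI / INR q).

Definition matS : mat := ((0, -1), (1, 0)).
Definition matSinv : mat := ((0, 1), (-1, 0)).
Definition matT (q : nat) : mat := ((1, lam q), (0, 1)).
Definition matTinv (q : nat) : mat := ((1, - lam q), (0, 1)).
Definition matI : mat := ((1, 0), (0, 1)).

Definition mmul (A B : mat) : mat :=
  let '((a, b), (c, d)) := A in
  let '((e, f), (g, h)) := B in
  ((a * e + b * g, a * f + b * h), (c * e + d * g, c * f + d * h)).

Definition mapp (A : mat) (v : vec) : vec :=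
  let '((a, b), (c, d)) := A in
  let '(x, y) := v in (a * x + b * y, c * x + d * y).

Inductive InG (q : nat) : mat -> Prop :=
| G_id : InG q matI
| G_S : forall M, InG q M -> InG q (mmul matS M)
| G_Sinv : forall M, InG q M -> InG q (mmul matSinv M)
| G_T : forall M, InG q M -> InG q (mmul (matT q) M)
| G_Tinv : forall M, InG q M -> InG q (mmul (matTinv q) M).

Definition InLambda (q : nat) (v : vec) : Prop :=
  exists M, InG q M /\ v = mapp M (1, 0).

Definition wedge (v w : vec) : R := fst v * snd w - fst w * snd v.

Definition vadd (v w : vec) : vec := (fst v + fst w, snd v + snd w).
Definition vscale (a : R) (v : vec) : vec := (a * fst v, a * snd v).
Definition vneg (v : vec) : vec := (- fst v, - snd v).
Definition vnorm (v : vec) : R := sqrt (fst v ^ 2 + snd v ^ 2).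

Definition matU (q : nat) : mat := mmul (matT q) matS.
Definition Uj (q j : nat) : vec := Nat.iter j (mapp (matU q)) (1, 0).
Definition xj (q j : nat) : R := fst (Uj q j).
Definition yj (q j : nat) : R := snd (Uj q j).

(* The vectors x_j v + y_j w for j = 0..q-2.  The vector for j = q-1 equals w
   (since U_q^(q-1)(1,0) = (0,1)) and is the first vector of the next block
   (or the final element), so consecutive blocks are glued at common
   endpoints. *)
Definition block (q : nat) (v w : vec) : list vec :=
  map (fun j => vadd (vscale (xj q j) v) (vscale (yj q j) w)) (seq 0 (q - 1)).

Fixpoint sbstep (q : nat) (L : list vec) : list vec :=
  match L with
  | v :: ((w :: _) as rest) => block q v w ++ sbstep q rest
  | _ => L
  end.

Definition SBlist (q : nat) (u0 u1 : vec) (n : nat) : list vec :=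
  Nat.iter n (sbstep q) [u0; u1].

Definition generated_at (q : nat) (u0 u1 : vec) (n : nat) (w : vec) : Prop :=
  (1 <= n)%nat /\ In w (SBlist q u0 u1 n) /\ ~ In w (SBlist q u0 u1 (n - 1)).

Definition grandchild (q : nat) (u0 u1 w : vec) : Prop :=
  exists n, generated_at q u0 u1 n w.

Definition in_open_cone (u0 u1 v : vec) : Prop :=
  exists a b, 0 < a /\ 0 < b /\ v = vadd (vscale a u0) (vscale b u1).

Definition parallel (v w : vec) : Prop := exists t, v = vscale t w.

(* Main.v *)
Require Import Defs.
From Stdlib Require Import Reals Lra List Lia ZArith Classical.
Import ListNotations.
Open Scope R_scope.


Lemma Uj_S q j : Uj q (S j) = (lam q * xj q j - yj q j, xj q j).
Proof.
  unfold xj, yj, Uj. change (Nat.iter (S j) (mapp (matU q)) (1, 0)) with (mapp (matU q) (Nat.iter j (mapp (matU q)) (1, 0))).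
  destruct (Nat.iter j (mapp (matU q)) (1, 0)) as [x y].
  unfold matU, mmul, matT, matS, mapp. simpl. f_equal; ring.
Qed.

Lemma xj_S q j : xj q (S j) = lam q * xj q j - yj q j.
Proof. unfold xj at 1. rewrite Uj_S. reflexivity. Qed.
Lemma yj_S q j : yj q (S j) = xj q j.
Proof. unfold yj at 1. rewrite Uj_S. reflexivity. Qed.
Lemma xj_0 q : xj q 0 = 1. Proof. reflexivity. Qed.
Lemma yj_0 q : yj q 0 = 0. Proof. reflexivity. Qed.

Definition th (q : nat) := PI / INR q.

Lemma th_pos q : (3 <= q)%nat -> 0 < th q /\ th q <= PI / 3 /\ INR q * th q = PI.
Proof.
  intros hq. unfold th.
  assert (H3 : 3 <= INR q) by (replace 3 with (INR 3) by (simpl; ring); apply le_INR; lia).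
  pose proof PI_RGT_0.
  split; [apply Rdiv_lt_0_compat; lra|]. split.
  - unfold Rdiv. apply Rmult_le_compat_l; [lra|]. apply Rinv_le_contravar; lra.
  - field. lra.
Qed.

Lemma xj_sin q j : xj q j * sin (th q) = sin (INR (S j) * th q)
               /\ yj q j * sin (th q) = sin (INR j * th q).
Proof.
  induction j as [|j [IH1 IH2]].
  - rewrite xj_0, yj_0. replace (INR 0 * th q) with 0 by (simpl; ring). replace (INR 1 * th q) with (th q) by (simpl; ring). rewrite sin_0. split; ring.
  - rewrite xj_S, yj_S. split; [|exact IH1].
    unfold lam.
    replace ((2 * cos (PI / INR q) * xj q j - yj q j) * sin (th q))
      with (2 * cos (th q) * (xj q j * sin (th q)) - yj q j * sin (th q)) by (unfold th; ring).
    rewrite IH1, IH2.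
    set (a := INR (S j) * th q).
    replace (INR (S (S j)) * th q) with (a + th q) by (unfold a; rewrite (S_INR (S j)); ring).
    replace (INR j * th q) with (a - th q) by (unfold a; rewrite (S_INR j); ring).
    rewrite sin_plus, sin_minus. ring.
Qed.

Lemma sin_th_pos q : (3 <= q)%nat -> 0 < sin (th q).
Proof. intros hq. destruct (th_pos q hq) as [H1 [H2 H3]]. pose proof PI_RGT_0. apply sin_gt_0; lra. Qed.

Lemma sin_ge_th t a : 0 < t -> t <= PI/2 -> t <= a -> a <= PI - t -> sin t <= sin a.
Proof.
  intros. pose proof PI_RGT_0.
  destruct (Rle_dec a (PI/2)).
  - apply sin_incr_1; lra.
  - rewrite <- (sin_PI_x a). apply sin_incr_1; lra.
Qed.

Lemma INR_th_range q j : (3 <= q)%nat -> (j <= q)%nat -> 0 <= INR j * th q <= PI.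
Proof.
  intros hq hj. destruct (th_pos q hq) as [H1 [H2 H3]].
  split. apply Rmult_le_pos; [apply pos_INR|lra].
  rewrite <- H3. apply Rmult_le_compat_r; [lra|]. apply le_INR; lia.
Qed.

Lemma xj_ge1 q j : (3 <= q)%nat -> (j <= q - 2)%nat -> 1 <= xj q j.
Proof.
  intros hq hj. destruct (xj_sin q j) as [Hx _]. pose proof (sin_th_pos q hq).
  destruct (th_pos q hq) as [H1 [H2 H3]]. pose proof PI_RGT_0.
  assert (sin (th q) <= sin (INR (S j) * th q)).
  { apply sin_ge_th; try lra.
    - rewrite <- (Rmult_1_l (th q)) at 1. apply Rmult_le_compat_r; [lra|].
      replace 1 with (INR 1) by reflexivity. apply le_INR; lia.
    - replace (PI - th q) with (INR (q - 1) * th q).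
      + apply Rmult_le_compat_r; [lra|]. apply le_INR; lia.
      + rewrite minus_INR by lia. simpl INR. rewrite Rmult_minus_distr_r. lra. }
  apply Rmult_le_reg_r with (sin (th q)); lra.
Qed.

Lemma xj_ge0 q j : (3 <= q)%nat -> (j <= q - 1)%nat -> 0 <= xj q j.
Proof.
  intros hq hj. destruct (xj_sin q j) as [Hx _]. pose proof (sin_th_pos q hq).
  assert (0 <= sin (INR (S j) * th q)).
  { destruct (INR_th_range q (S j) hq) as [A B]; [lia|]. apply sin_ge_0; lra. }
  apply Rmult_le_reg_r with (sin (th q)); lra.
Qed.

Lemma yj_ge0 q j : (3 <= q)%nat -> (j <= q - 1)%nat -> 0 <= yj q j.
Proof.
  intros hq hj. destruct j. rewrite yj_0; lra. rewrite yj_S. apply xj_ge0; lia.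
Qed.

Lemma yj_ge1 q j : (3 <= q)%nat -> (1 <= j <= q - 1)%nat -> 1 <= yj q j.
Proof.
  intros hq hj. destruct j. lia. rewrite yj_S. apply xj_ge1; lia.
Qed.

Lemma Uj_last q : (3 <= q)%nat -> xj q (q - 1) = 0 /\ yj q (q - 1) = 1.
Proof.
  intros hq. destruct (xj_sin q (q-1)) as [Hx Hy]. pose proof (sin_th_pos q hq).
  destruct (th_pos q hq) as [H1 [H2 H3]].
  replace (S (q - 1)) with q in Hx by lia. rewrite H3, sin_PI in Hx.
  rewrite minus_INR in Hy by lia. simpl INR in Hy.
  replace ((INR q - 1) * th q) with (PI - th q) in Hy by lra. rewrite sin_PI_x in Hy.
  split.
  - apply Rmult_eq_reg_r with (sin (th q)); lra.
  - apply Rmult_eq_reg_r with (sin (th q)); lra.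
Qed.

Lemma lam_bounds q : (3 <= q)%nat -> 1 <= lam q < 2.
Proof.
  intros hq. split.
  - pose proof (xj_ge1 q 1 hq ltac:(lia)). rewrite xj_S, xj_0, yj_0 in H. lra.
  - unfold lam. pose proof (COS_bound (PI / INR q)) as [_ Hc].
    pose proof (sin_th_pos q hq). pose proof (sin2_cos2 (PI / INR q)).
    unfold th in H. destruct (Req_dec (cos (PI / INR q)) 1) as [E|E].
    + rewrite E in H0. unfold Rsqr in H0. nra.
    + lra.
Qed.

Definition cj (q : nat) (a b : vec) (j : nat) : vec :=
  vadd (vscale (xj q j) a) (vscale (yj q j) b).

Lemma block_eq q a b : block q a b = map (cj q a b) (seq 0 (q - 1)).
Proof. reflexivity. Qed.

Lemma cj_0 q a b : cj q a b 0 = a.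
Proof. destruct a, b. unfold cj, vadd, vscale. rewrite xj_0, yj_0. simpl. f_equal; ring. Qed.

Lemma cj_last q a b : (3 <= q)%nat -> cj q a b (q - 1) = b.
Proof. intros hq. destruct (Uj_last q hq) as [H1 H2]. destruct a, b. unfold cj, vadd, vscale.
  rewrite H1, H2. simpl. f_equal; ring. Qed.

Lemma sbstep_cons2 q v w r : sbstep q (v :: w :: r) = block q v w ++ sbstep q (w :: r).
Proof. reflexivity. Qed.

Lemma sbstep_first q x m : (3 <= q)%nat -> exists t, sbstep q (x :: m) = x :: t.
Proof.
  intros hq. destruct m as [|y m].
  - exists []. reflexivity.
  - simpl. rewrite block_eq. replace (q - 1)%nat with (S (q - 2)) by lia. simpl.
    rewrite cj_0. eexists. reflexivity.
Qed.

Lemma sbstep_last q l x : exists t, sbstep q (l ++ [x]) = t ++ [x].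
Proof.
  induction l as [|y l IH].
  - exists []. reflexivity.
  - destruct l as [|z l].
    + exists (block q y x). reflexivity.
    + destruct IH as [t Ht]. exists (block q y z ++ t).
      change ((y :: z :: l) ++ [x]) with (y :: z :: (l ++ [x])).
      rewrite sbstep_cons2. change (z :: l ++ [x]) with ((z :: l) ++ [x]). rewrite Ht.
      rewrite app_assoc. reflexivity.
Qed.

Lemma sbstep_app q l x m :
  sbstep q (l ++ x :: m) = removelast (sbstep q (l ++ [x])) ++ sbstep q (x :: m).
Proof.
  induction l as [|y l IH].
  - reflexivity.
  - destruct l as [|z l].
    + simpl. rewrite removelast_last. reflexivity.
    + change ((y :: z :: l) ++ x :: m) with (y :: z :: (l ++ x :: m)).
      change ((y :: z :: l) ++ [x]) with (y :: z :: (l ++ [x])).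
      rewrite !sbstep_cons2. change (z :: l ++ x :: m) with ((z :: l) ++ x :: m).
      change (z :: l ++ [x]) with ((z :: l) ++ [x]).
      rewrite IH. rewrite removelast_app.
      * rewrite app_assoc. reflexivity.
      * destruct (sbstep_last q (z :: l) x) as [t Ht]. rewrite Ht.
        destruct t; discriminate.
Qed.

Definition it q n L := Nat.iter n (sbstep q) L.

Lemma it_S q n L : it q (S n) L = sbstep q (it q n L).
Proof. reflexivity. Qed.

Lemma it_first q n x m : (3 <= q)%nat -> exists t, it q n (x :: m) = x :: t.
Proof.
  intros hq. induction n as [|n [t Ht]].
  - exists m. reflexivity.
  - rewrite it_S, Ht. apply sbstep_first; auto.
Qed.

Lemma it_last q n l x : exists t, it q n (l ++ [x]) = t ++ [x].
Proof.
  induction n as [|n [t Ht]].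
  - exists l. reflexivity.
  - rewrite it_S, Ht. apply sbstep_last.
Qed.

Lemma it_app q n l x m : (3 <= q)%nat ->
  it q n (l ++ x :: m) = removelast (it q n (l ++ [x])) ++ it q n (x :: m).
Proof.
  intros hq. induction n as [|n IH].
  - simpl. rewrite removelast_last. reflexivity.
  - rewrite !it_S, IH.
    destruct (it_last q n l x) as [t1 H1]. destruct (it_first q n x m hq) as [t2 H2].
    rewrite H1, H2, removelast_last. apply sbstep_app.
Qed.

Lemma In_it_app q n l x m w : (3 <= q)%nat ->
  (In w (it q n (l ++ x :: m)) <-> In w (it q n (l ++ [x])) \/ In w (it q n (x :: m))).
Proof.
  intros hq. rewrite it_app by auto.
  destruct (it_last q n l x) as [t1 H1]. destruct (it_first q n x m hq) as [t2 H2].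
  rewrite H1, H2, removelast_last. rewrite !in_app_iff. simpl. intuition.
Qed.

Lemma In_it_seq q n (f : nat -> vec) w k m : (3 <= q)%nat -> (1 <= m)%nat ->
  (In w (it q n (map f (seq k (S m)))) <->
   exists j, (k <= j < k + m)%nat /\ In w (it q n [f j; f (S j)])).
Proof.
  intros hq. revert k. induction m as [|m IH]; intros k hm; [lia|].
  destruct m as [|m].
  - simpl. split.
    + intros H. exists k. split; [lia|exact H].
    + intros [j [Hj Hw]]. replace j with k in Hw by lia. exact Hw.
  - change (map f (seq k (S (S (S m))))) with ([f k] ++ f (S k) :: map f (seq (S (S k)) (S m))).
    rewrite In_it_app by auto.
    change (f (S k) :: map f (seq (S (S k)) (S m))) with (map f (seq (S k) (S (S m)))).
    rewrite (IH (S k)) by lia. simpl app. split.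
    + intros [H|[j [Hj Hw]]].
      * exists k. split; [lia|exact H].
      * exists j. split; [lia|exact Hw].
    + intros [j [Hj Hw]]. destruct (Nat.eq_dec j k) as [->|ne].
      * left; exact Hw.
      * right. exists j. split; [lia|exact Hw].
Qed.

Definition lin (f : vec -> vec) := forall x y p p',
  f (vadd (vscale x p) (vscale y p')) = vadd (vscale x (f p)) (vscale y (f p')).

Lemma sbstep_map q f L : lin f -> map f (sbstep q L) = sbstep q (map f L).
Proof.
  intros hf. induction L as [|v L IH]; [reflexivity|].
  destruct L as [|w L]; [reflexivity|].
  change (sbstep q (v :: w :: L)) with (block q v w ++ sbstep q (w :: L)).
  change (map f (v :: w :: L)) with (f v :: f w :: map f L).
  change (sbstep q (f v :: f w :: map f L)) with (block q (f v) (f w) ++ sbstep q (f w :: map f L)).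
  rewrite map_app, IH. f_equal. rewrite !block_eq, map_map. apply map_ext. intros j.
  unfold cj. apply hf.
Qed.

Lemma it_map q n f L : lin f -> map f (it q n L) = it q n (map f L).
Proof.
  intros hf. induction n as [|n IH]; [reflexivity|]. rewrite !it_S, <- IH. apply sbstep_map; auto.
Qed.

Definition comb (a b p : vec) : vec := vadd (vscale (fst p) a) (vscale (snd p) b).

Lemma comb_lin a b : lin (comb a b).
Proof. intros x y [p1 p2] [p3 p4]. destruct a, b. unfold comb, vadd, vscale. simpl. f_equal; ring. Qed.

Lemma mapp_lin A : lin (mapp A).
Proof. intros x y [p1 p2] [p3 p4]. destruct A as [[a b] [c d]]. unfold mapp, vadd, vscale. simpl. f_equal; ring. Qed.

Definition e1 : vec := (1, 0).
Definition e2 : vec := (0, 1).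
Definition CL q n := SBlist q e1 e2 n.

Lemma comb_e1 a b : comb a b e1 = a.
Proof. destruct a, b. unfold comb, e1, vadd, vscale. simpl. f_equal; ring. Qed.
Lemma comb_e2 a b : comb a b e2 = b.
Proof. destruct a, b. unfold comb, e2, vadd, vscale. simpl. f_equal; ring. Qed.

Lemma SBlist_comb q a b n : SBlist q a b n = map (comb a b) (CL q n).
Proof.
  unfold CL, SBlist. change (Nat.iter n (sbstep q)) with (it q n).
  rewrite it_map by apply comb_lin. simpl. rewrite comb_e1, comb_e2. reflexivity.
Qed.

Lemma it_pair q a b n : it q n [a; b] = map (comb a b) (CL q n).
Proof. rewrite <- SBlist_comb. reflexivity. Qed.

Lemma sbstep_pair q a b : (3 <= q)%nat -> sbstep q [a; b] = map (cj q a b) (seq 0 q).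
Proof.
  intros hq. change (sbstep q [a;b]) with (block q a b ++ [b]). rewrite block_eq.
  assert (E : seq 0 q = seq 0 (q - 1) ++ [(q - 1)%nat]).
  { replace q with (S (q - 1)) at 1 by lia. rewrite seq_S. reflexivity. }
  rewrite E, map_app. simpl. rewrite cj_last by auto. reflexivity.
Qed.

Lemma cj_comb q a b j : cj q a b j = comb a b (Uj q j).
Proof. reflexivity. Qed.

Lemma comb_e1e2 p : comb e1 e2 p = p.
Proof. destruct p. unfold comb, e1, e2, vadd, vscale. simpl. f_equal; ring. Qed.

Lemma comb_comb a b c d p : comb (comb a b c) (comb a b d) p = comb a b (comb c d p).
Proof. destruct a, b, c, d, p. unfold comb, vadd, vscale. simpl. f_equal; ring. Qed.

Lemma C_S_iff q n w : (3 <= q)%nat ->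
  (In w (CL q (S n)) <-> exists j r, (j <= q - 2)%nat /\ In r (CL q n) /\
       w = comb (Uj q j) (Uj q (S j)) r).
Proof.
  intros hq. unfold CL, SBlist. change (Nat.iter (S n) (sbstep q) [e1; e2]) with (it q (S n) [e1;e2]).
  unfold it. rewrite Nat.iter_succ_r. change (Nat.iter n (sbstep q)) with (it q n).
  rewrite sbstep_pair by auto. replace (seq 0 q) with (seq 0 (S (q - 1))) by (f_equal; lia).
  rewrite In_it_seq by lia.
  change (Nat.iter n (sbstep q) [e1; e2]) with (CL q n).
  split.
  - intros [j [Hj Hw]]. rewrite it_pair in Hw. apply in_map_iff in Hw as [r [Hr1 Hr2]].
    exists j, r. split; [lia|]. split; auto. rewrite <- Hr1, !cj_comb, !comb_e1e2. reflexivity.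
  - intros [j [r [Hj [Hr ->]]]]. exists j. split; [lia|]. rewrite it_pair. apply in_map_iff.
    exists r. split; auto. rewrite !cj_comb, !comb_e1e2. reflexivity.
Qed.

Lemma Uj_succ q j : Uj q (S j) = mapp (matU q) (Uj q j).
Proof. reflexivity. Qed.

Lemma mapp_comb A c d r : mapp A (comb c d r) = comb (mapp A c) (mapp A d) r.
Proof. destruct A as [[a b] [e f]], c, d, r. unfold mapp, comb, vadd, vscale. simpl. f_equal; ring. Qed.

Lemma mapp_vneg A v : mapp A (vneg v) = vneg (mapp A v).
Proof. destruct A as [[a b] [e f]], v. unfold mapp, vneg. simpl. f_equal; ring. Qed.

Lemma SS v : mapp matS (mapp matS v) = vneg v.
Proof. destruct v. unfold mapp, matS, vneg. simpl. f_equal; ring. Qed.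
Lemma Sinv_eq v : mapp matSinv v = vneg (mapp matS v).
Proof. destruct v. unfold mapp, matS, matSinv, vneg. simpl. f_equal; ring. Qed.
Lemma vneg_vneg v : vneg (vneg v) = v.
Proof. destruct v. unfold vneg. simpl. f_equal; ring. Qed.
Lemma TS_U q v : mapp (matT q) (mapp matS v) = mapp (matU q) v.
Proof. destruct v. unfold mapp, matS, matT, matU, mmul. simpl. f_equal; ring. Qed.
Lemma TinvU_S q v : mapp (matTinv q) (mapp (matU q) v) = mapp matS v.
Proof. destruct v. unfold mapp, matS, matT, matTinv, matU, mmul. simpl. f_equal; ring. Qed.

Lemma Uj_qm1 q : (3 <= q)%nat -> Uj q (q - 1) = e2.
Proof. intros hq. destruct (Uj_last q hq) as [H1 H2]. unfold xj, yj in *. destruct (Uj q (q-1)). simpl in *. subst. reflexivity. Qed.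

Lemma Uj_qm2 q : (3 <= q)%nat -> Uj q (q - 2) = (1, lam q).
Proof. intros hq. pose proof (Uj_qm1 q hq). replace (q - 1)%nat with (S (q - 2)) in H by lia.
  rewrite Uj_S in H. unfold e2 in H. injection H. intros H1 H2. unfold xj, yj in *.
  destruct (Uj q (q-2)). simpl in *. f_equal; nra. Qed.

Lemma Uj_1 q : Uj q 1 = (lam q, 1).
Proof. unfold Uj. simpl. unfold matU, mmul, matT, matS, mapp. f_equal; ring. Qed.

Lemma C0 q : CL q 0 = [e1; e2].
Proof. reflexivity. Qed.

Lemma C_S_intro q n j r : (3 <= q)%nat -> (j <= q - 2)%nat -> In r (CL q n) ->
  In (comb (Uj q j) (Uj q (S j)) r) (CL q (S n)).
Proof. intros hq hj hr. apply C_S_iff; auto. exists j, r. auto. Qed.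

Lemma Uj_in_C1 q j : (3 <= q)%nat -> (j <= q - 2)%nat -> In (Uj q j) (CL q 1).
Proof. intros hq hj. replace (Uj q j) with (comb (Uj q j) (Uj q (S j)) e1) by apply comb_e1.
  apply C_S_intro; auto. rewrite C0. simpl; auto. Qed.

Definition EI (p : vec) := 0 <= fst p /\ 0 <= snd p /\ (p = e1 \/ 1 <= snd p) /\ (p = e2 \/ 1 <= fst p).

Lemma C_EI q n p : (3 <= q)%nat -> In p (CL q n) -> EI p.
Proof.
  intros hq. revert p. induction n as [|n IH]; intros p Hp.
  - rewrite C0 in Hp. destruct Hp as [<-|[<-|[]]]; unfold EI, e1, e2; simpl; repeat split; lra || auto.
  - apply C_S_iff in Hp as [j [r [Hj [Hr ->]]]]; auto.
    destruct (IH r Hr) as [r1 [r2 [r3 r4]]].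
    pose proof (xj_ge0 q j hq ltac:(lia)). pose proof (xj_ge0 q (S j) hq ltac:(lia)).
    pose proof (yj_ge0 q j hq ltac:(lia)). pose proof (yj_ge0 q (S j) hq ltac:(lia)).
    pose proof (xj_ge1 q j hq ltac:(lia)). pose proof (yj_ge1 q (S j) hq ltac:(lia)).
    assert (Ex : fst (comb (Uj q j) (Uj q (S j)) r) = fst r * xj q j + snd r * xj q (S j)) by reflexivity.
    assert (Ey : snd (comb (Uj q j) (Uj q (S j)) r) = fst r * yj q j + snd r * yj q (S j)) by reflexivity.
    unfold EI. rewrite Ex, Ey. split; [nra|]. split; [nra|]. split.
    + destruct r3 as [->|r3].
      * destruct j as [|j].
        -- left. rewrite comb_e1. reflexivity.
        -- right. unfold e1; simpl. pose proof (yj_ge1 q (S j) hq ltac:(lia)). lra.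
      * right. nra.
    + destruct r4 as [->|r4].
      * destruct (Nat.eq_dec (S j) (q - 1)) as [E|E].
        -- left. rewrite comb_e2, E. apply Uj_qm1; auto.
        -- right. unfold e2; simpl. pose proof (xj_ge1 q (S j) hq ltac:(lia)). lra.
      * right. nra.
Qed.

Definition X q (w : vec) := exists n p, In p (CL q n) /\
  (w = p \/ w = mapp matS p \/ w = vneg p \/ w = vneg (mapp matS p)).

Lemma X_neg q w : X q w -> X q (vneg w).
Proof.
  intros [n [p [Hp H]]]. exists n, p. split; auto.
  destruct H as [ -> |[ -> |[ -> | -> ]]]; rewrite ?vneg_vneg; auto.
Qed.

Lemma X_C q n p : In p (CL q n) -> X q p.
Proof. intros. exists n, p. auto. Qed.
Lemma X_SC q n p : In p (CL q n) -> X q (mapp matS p).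
Proof. intros. exists n, p. auto. Qed.

Lemma X_S q w : X q w -> X q (mapp matS w).
Proof.
  intros [n [p [Hp H]]]. destruct H as [ -> |[ -> |[ -> | -> ]]].
  - eapply X_SC; eauto.
  - rewrite SS. apply X_neg. eapply X_C; eauto.
  - rewrite mapp_vneg. apply X_neg. eapply X_SC; eauto.
  - rewrite mapp_vneg, SS, vneg_vneg. eapply X_C; eauto.
Qed.

Lemma X_Sinv q w : X q w -> X q (mapp matSinv w).
Proof. intros. rewrite Sinv_eq. apply X_neg, X_S; auto. Qed.

Lemma X_U_C q n p : (3 <= q)%nat -> In p (CL q n) -> X q (mapp (matU q) p).
Proof.
  intros hq Hp. destruct n as [|n].
  - rewrite C0 in Hp. destruct Hp as [<-|[<-|[]]].
    + apply (X_C q 1). change (mapp (matU q) e1) with (Uj q 1).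
      apply Uj_in_C1; auto; lia.
    + replace (mapp (matU q) e2) with (vneg e1).
      * apply X_neg. apply (X_C q 0). rewrite C0; simpl; auto.
      * unfold e1, e2, vneg, mapp, matU, mmul, matT, matS. simpl. f_equal; ring.
  - apply C_S_iff in Hp as [j [r [Hj [Hr ->]]]]; auto.
    rewrite mapp_comb, <- !Uj_succ.
    destruct (Nat.eq_dec (S j) (q - 1)) as [E|E].
    + rewrite E, Uj_qm1 by auto. rewrite Uj_succ, Uj_qm1 by auto.
      replace (comb e2 (mapp (matU q) e2) r) with (mapp matS r).
      * eapply X_SC; eauto.
      * destruct r. unfold comb, e2, mapp, matU, matS, mmul, matT, vadd, vscale. simpl. f_equal; ring.
    + apply (X_C q (S n)). apply C_S_intro; auto. lia.
Qed.

Lemma X_T q w : (3 <= q)%nat -> X q w -> X q (mapp (matT q) w).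
Proof.
  intros hq [n [p [Hp H]]].
  assert (HT : X q (mapp (matT q) p)).
  { apply (X_C q (S n)). replace (mapp (matT q) p) with (comb (Uj q 0) (Uj q 1) p).
    - apply C_S_intro; auto. lia.
    - rewrite Uj_1. destruct p. unfold comb, Uj, mapp, matT, vadd, vscale. simpl. f_equal; ring. }
  destruct H as [ -> |[ -> |[ -> | -> ]]].
  - auto.
  - rewrite TS_U. eapply X_U_C; eauto.
  - rewrite mapp_vneg. apply X_neg; auto.
  - rewrite mapp_vneg, TS_U. apply X_neg. eapply X_U_C; eauto.
Qed.

Lemma X_Tinv q w : (3 <= q)%nat -> X q w -> X q (mapp (matTinv q) w).
Proof.
  intros hq [n [p [Hp H]]].
  assert (H1 : X q (mapp (matTinv q) p)).
  { destruct n as [|n].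
    - rewrite C0 in Hp. destruct Hp as [<-|[<-|[]]].
      + replace (mapp (matTinv q) e1) with e1.
        * apply (X_C q 0). rewrite C0; simpl; auto.
        * unfold e1, mapp, matTinv. f_equal; ring.
      + replace (mapp (matTinv q) e2) with (mapp matS (Uj q (q - 2))).
        * apply (X_SC q 1). apply Uj_in_C1; auto.
        * rewrite Uj_qm2 by auto. unfold e2, mapp, matS, matTinv. f_equal; ring.
    - apply C_S_iff in Hp as [j [r [Hj [Hr ->]]]]; auto.
      rewrite mapp_comb. destruct j as [|j].
      + replace (comb (mapp (matTinv q) (Uj q 0)) (mapp (matTinv q) (Uj q 1)) r) with r.
        * eapply X_C; eauto.
        * rewrite Uj_1. destruct r. unfold comb, Uj, mapp, matTinv, vadd, vscale. simpl. f_equal; ring.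
      + rewrite !Uj_succ, !TinvU_S, <- Uj_succ, <- mapp_comb. apply (X_SC q (S n)).
        apply C_S_intro; auto. lia. }
  assert (H2 : X q (mapp (matTinv q) (mapp matS p))).
  { replace (mapp (matTinv q) (mapp matS p)) with (mapp matS (comb (Uj q (q-2)) (Uj q (S (q - 2))) p)).
    - apply (X_SC q (S n)). apply C_S_intro; auto.
    - replace (S (q - 2)) with (q - 1)%nat by lia. rewrite Uj_qm1, Uj_qm2 by auto.
      destruct p. unfold comb, e2, mapp, matS, matTinv, vadd, vscale. simpl. f_equal; ring. }
  destruct H as [ -> |[ -> |[ -> | -> ]]]; auto; rewrite mapp_vneg; apply X_neg; auto.
Qed.

Lemma InG_X q M : (3 <= q)%nat -> InG q M -> X q (mapp M (1, 0)).
Proof.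
  intros hq HM. induction HM.
  - replace (mapp matI (1,0)) with e1. apply (X_C q 0). rewrite C0; simpl; auto.
    unfold e1, mapp, matI. f_equal; ring.
  - replace (mapp (mmul matS M) (1,0)) with (mapp matS (mapp M (1,0))). apply X_S; auto.
    destruct M as [[a b][c d]]. unfold mapp, mmul, matS. f_equal; ring.
  - replace (mapp (mmul matSinv M) (1,0)) with (mapp matSinv (mapp M (1,0))). apply X_Sinv; auto.
    destruct M as [[a b][c d]]. unfold mapp, mmul, matSinv. f_equal; ring.
  - replace (mapp (mmul (matT q) M) (1,0)) with (mapp (matT q) (mapp M (1,0))). apply X_T; auto.
    destruct M as [[a b][c d]]. unfold mapp, mmul, matT. f_equal; ring.
  - replace (mapp (mmul (matTinv q) M) (1,0)) with (mapp (matTinv q) (mapp M (1,0))). apply X_Tinv; auto.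
    destruct M as [[a b][c d]]. unfold mapp, mmul, matTinv. f_equal; ring.
Qed.

Lemma X_prop q w : (3 <= q)%nat -> X q w -> w = e1 \/ w = vneg e1 \/ 1 <= Rabs (snd w).
Proof.
  intros hq [n [p [Hp H]]]. destruct (C_EI q n p hq Hp) as [p1 [p2 [p3 p4]]].
  destruct p as [x y]. simpl in *.
  destruct H as [ -> |[ -> |[ -> | -> ]]]; unfold mapp, matS, vneg, e1, e2 in *; simpl.
  - destruct p3 as [E|E]; auto. right; right. rewrite Rabs_right; lra.
  - destruct p4 as [E|E]. right; left. injection E; intros; subst. f_equal; ring.
    right; right. rewrite Rabs_right; lra.
  - destruct p3 as [E|E]. right; left. injection E; intros; subst. reflexivity.
    right; right. rewrite Rabs_left1; lra.
  - destruct p4 as [E|E]. left. injection E; intros; subst. f_equal; ring.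
    right; right. rewrite Rabs_left1; lra.
Qed.

Lemma mapp_mmul A M v : mapp (mmul A M) v = mapp A (mapp M v).
Proof. destruct A as [[a b][c d]], M as [[e f][g h]], v. unfold mapp, mmul. f_equal; ring. Qed.

Lemma Lam_S q v : InLambda q v -> InLambda q (mapp matS v).
Proof. intros [M [HM ->]]. exists (mmul matS M). split. constructor; auto. rewrite mapp_mmul; auto. Qed.
Lemma Lam_Sinv q v : InLambda q v -> InLambda q (mapp matSinv v).
Proof. intros [M [HM ->]]. exists (mmul matSinv M). split. constructor; auto. rewrite mapp_mmul; auto. Qed.
Lemma Lam_T q v : InLambda q v -> InLambda q (mapp (matT q) v).
Proof. intros [M [HM ->]]. exists (mmul (matT q) M). split. constructor; auto. rewrite mapp_mmul; auto. Qed.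
Lemma Lam_Tinv q v : InLambda q v -> InLambda q (mapp (matTinv q) v).
Proof. intros [M [HM ->]]. exists (mmul (matTinv q) M). split. constructor; auto. rewrite mapp_mmul; auto. Qed.

Lemma Lam_neg q v : InLambda q v -> InLambda q (vneg v).
Proof. intros H. rewrite <- SS. apply Lam_S, Lam_S; auto. Qed.

Lemma Lam_e1 q : InLambda q e1.
Proof. exists matI. split. constructor. unfold e1, mapp, matI. f_equal; ring. Qed.
Lemma Lam_e2 q : InLambda q e2.
Proof. replace e2 with (mapp matS e1). apply Lam_S, Lam_e1. unfold e1, e2, mapp, matS. f_equal; ring. Qed.

Lemma step_gen q A B (v0 : vec) :
  (forall v, mapp A (mapp B v) = v) ->
  (forall x y, wedge (mapp A x) y = wedge x (mapp B y)) ->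
  (forall v, InLambda q v -> InLambda q (mapp B v)) ->
  (forall v1, InLambda q v1 -> v0 <> v1 -> v0 <> vneg v1 -> 1 <= Rabs (wedge v0 v1)) ->
  (forall v1, InLambda q v1 -> mapp A v0 <> v1 -> mapp A v0 <> vneg v1 -> 1 <= Rabs (wedge (mapp A v0) v1)).
Proof.
  intros AB W LB IH v1 Hv1 N1 N2. rewrite W. apply IH; auto.
  - intros E. apply N1. rewrite E. auto.
  - intros E. apply N2. rewrite E, <- mapp_vneg. auto.
Qed.

Lemma part1_aux q M : (3 <= q)%nat -> InG q M ->
  forall v1, InLambda q v1 -> mapp M (1,0) <> v1 -> mapp M (1,0) <> vneg v1 ->
  1 <= Rabs (wedge (mapp M (1,0)) v1).
Proof.
  intros hq HM. induction HM.
  - intros v1 Hv1 N1 N2. replace (mapp matI (1,0)) with e1 in *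
      by (unfold e1, mapp, matI; f_equal; ring).
    destruct Hv1 as [M [HM ->]]. destruct (X_prop q _ hq (InG_X q M hq HM)) as [E|[E|E]].
    + exfalso; auto.
    + exfalso. apply N2. rewrite E, vneg_vneg. reflexivity.
    + unfold wedge, e1. simpl. replace (1 * snd (mapp M (1, 0)) - fst (mapp M (1, 0)) * 0) with (snd (mapp M (1,0))) by ring. auto.
  - rewrite mapp_mmul. apply step_gen with matSinv; auto.
    + intros [x y]. unfold mapp, matS, matSinv. f_equal; ring.
    + intros [x y] [z w]. unfold mapp, matS, matSinv, wedge. simpl. ring.
    + apply Lam_Sinv.
  - rewrite mapp_mmul. apply step_gen with matS; auto.
    + intros [x y]. unfold mapp, matS, matSinv. f_equal; ring.
    + intros [x y] [z w]. unfold mapp, matS, matSinv, wedge. simpl. ring.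
    + apply Lam_S.
  - rewrite mapp_mmul. apply step_gen with (matTinv q); auto.
    + intros [x y]. unfold mapp, matT, matTinv. f_equal; ring.
    + intros [x y] [z w]. unfold mapp, matT, matTinv, wedge. simpl. ring.
    + apply Lam_Tinv.
  - rewrite mapp_mmul. apply step_gen with (matT q); auto.
    + intros [x y]. unfold mapp, matT, matTinv. f_equal; ring.
    + intros [x y] [z w]. unfold mapp, matT, matTinv, wedge. simpl. ring.
    + apply Lam_T.
Qed.

Lemma part1 q : (3 <= q)%nat -> forall v0 v1 : vec, InLambda q v0 -> InLambda q v1 ->
     v0 <> v1 -> v0 <> vneg v1 -> 1 <= Rabs (wedge v0 v1).
Proof. intros hq v0 v1 [M [HM ->]]. apply part1_aux; auto. Qed.

Lemma Tpow_nat q n : exists M, InG q M /\ mapp M e1 = e1 /\ mapp M e2 = (INR n * lam q, 1)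
  /\ exists M', InG q M' /\ mapp M' e1 = e1 /\ mapp M' e2 = (- (INR n * lam q), 1).
Proof.
  induction n as [|n [M [HM [H1 [H2 [M' [HM' [H1' H2']]]]]]]].
  - exists matI. split. constructor. split. unfold e1, mapp, matI. f_equal; ring.
    split. unfold e2, mapp, matI. simpl. f_equal; ring.
    exists matI. split. constructor. split. unfold e1, mapp, matI. f_equal; ring.
    unfold e2, mapp, matI. simpl. f_equal; ring.
  - exists (mmul (matT q) M). split. constructor; auto. rewrite !mapp_mmul, H1, H2.
    split. unfold e1, mapp, matT. f_equal; ring. split. rewrite S_INR. unfold mapp, matT. f_equal; ring.
    exists (mmul (matTinv q) M'). split. constructor; auto. rewrite !mapp_mmul, H1', H2'.
    split. unfold e1, mapp, matTinv. f_equal; ring. rewrite S_INR. unfold mapp, matTinv. f_equal; ring.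
Qed.

Lemma Tpow_Z q k : exists M, InG q M /\ mapp M e1 = e1 /\ mapp M e2 = (IZR k * lam q, 1).
Proof.
  destruct (Z_le_gt_dec 0 k) as [h|h].
  - destruct (Tpow_nat q (Z.to_nat k)) as [M [HM [H1 [H2 _]]]]. exists M. repeat split; auto.
    rewrite H2, INR_IZR_INZ, Z2Nat.id by lia. reflexivity.
  - destruct (Tpow_nat q (Z.to_nat (- k))) as [_ [_ [_ [_ [M [HM [H1 H2]]]]]]]. exists M. repeat split; auto.
    rewrite H2, INR_IZR_INZ, Z2Nat.id by lia. rewrite opp_IZR. f_equal; ring.
Qed.

Lemma Lam_shift q k x y : InLambda q (x, y) -> InLambda q (x + IZR k * lam q * y, y).
Proof.
  intros [N [HN E]]. destruct (Tpow_Z q k) as [M [HM [H1 H2]]].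
  exists (mmul M N). split.
  - clear -HM HN. induction HM.
    + replace (mmul matI N) with N; auto. destruct N as [[a b][c d]]. unfold mmul, matI. f_equal; f_equal; ring.
    + replace (mmul (mmul matS M) N) with (mmul matS (mmul M N)). constructor; auto.
      destruct N as [[a b][c d]], M as [[e f][g h]]. unfold mmul, matS. f_equal; f_equal; ring.
    + replace (mmul (mmul matSinv M) N) with (mmul matSinv (mmul M N)). constructor; auto.
      destruct N as [[a b][c d]], M as [[e f][g h]]. unfold mmul, matSinv. f_equal; f_equal; ring.
    + replace (mmul (mmul (matT q) M) N) with (mmul (matT q) (mmul M N)). constructor; auto.
      destruct N as [[a b][c d]], M as [[e f][g h]]. unfold mmul, matT. f_equal; f_equal; ring.
    + replace (mmul (mmul (matTinv q) M) N) with (mmul (matTinv q) (mmul M N)). constructor; auto.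
      destruct N as [[a b][c d]], M as [[e f][g h]]. unfold mmul, matTinv. f_equal; f_equal; ring.
  - rewrite mapp_mmul, <- E. destruct M as [[a b][c d]]. unfold mapp, e1, e2 in *.
    injection H1; injection H2; intros. f_equal; nra.
Qed.

Lemma InG_mmul q M N : InG q M -> InG q N -> InG q (mmul M N).
Proof.
  intros HM HN. induction HM.
  + replace (mmul matI N) with N; auto. destruct N as [[a b][c d]]. unfold mmul, matI. f_equal; f_equal; ring.
  + replace (mmul (mmul matS M) N) with (mmul matS (mmul M N)). constructor; auto.
    destruct N as [[a b][c d]], M as [[e f][g h]]. unfold mmul, matS. f_equal; f_equal; ring.
  + replace (mmul (mmul matSinv M) N) with (mmul matSinv (mmul M N)). constructor; auto.
    destruct N as [[a b][c d]], M as [[e f][g h]]. unfold mmul, matSinv. f_equal; f_equal; ring.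
  + replace (mmul (mmul (matT q) M) N) with (mmul (matT q) (mmul M N)). constructor; auto.
    destruct N as [[a b][c d]], M as [[e f][g h]]. unfold mmul, matT. f_equal; f_equal; ring.
  + replace (mmul (mmul (matTinv q) M) N) with (mmul (matTinv q) (mmul M N)). constructor; auto.
    destruct N as [[a b][c d]], M as [[e f][g h]]. unfold mmul, matTinv. f_equal; f_equal; ring.
Qed.

Lemma claimY q x : (3 <= q)%nat -> InLambda q (x, 1) -> exists k, x = IZR k * lam q.
Proof.
  intros hq H. destruct (lam_bounds q hq) as [L1 L2].
  set (k := (up (x / lam q) - 1)%Z).
  destruct (archimed (x / lam q)) as [A1 A2].
  assert (K1 : IZR k <= x / lam q) by (unfold k; rewrite minus_IZR; simpl; lra).
  assert (K2 : x / lam q < IZR k + 1) by (unfold k; rewrite minus_IZR; simpl; lra).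
  set (t := x - IZR k * lam q).
  assert (T1 : 0 <= t).
  { unfold t. apply Rmult_le_compat_r with (r := lam q) in K1; [|lra].
    unfold Rdiv in K1. rewrite Rmult_assoc, Rinv_l in K1 by lra. lra. }
  assert (T2 : t < lam q).
  { unfold t. apply Rmult_lt_compat_r with (r := lam q) in K2; [|lra].
    unfold Rdiv in K2. rewrite Rmult_assoc, Rinv_l in K2 by lra. lra. }
  assert (Ht : InLambda q (t, 1)).
  { pose proof (Lam_shift q (- k) x 1 H). rewrite opp_IZR in H0.
    replace (x + - IZR k * lam q * 1) with t in H0 by (unfold t; ring). exact H0. }
  exists k. destruct (Req_dec t 0) as [E|E]. unfold t in E; lra.
  exfalso.
  assert (W1 : 1 <= Rabs (wedge (t, 1) e2)).
  { apply (part1 q hq); auto. apply Lam_e2. unfold e2; intros F; injection F; lra.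
    unfold e2, vneg; intros F; injection F; lra. }
  assert (Hl : InLambda q (lam q, 1)).
  { replace (lam q, 1) with (mapp (matT q) e2). apply Lam_T, Lam_e2. unfold mapp, matT, e2. f_equal; ring. }
  assert (W2 : 1 <= Rabs (wedge (t, 1) (lam q, 1))).
  { apply (part1 q hq); auto. intros F; injection F; lra. unfold vneg; intros F; injection F; simpl; lra. }
  unfold wedge, e2 in W1, W2; simpl in W1, W2.
  replace (t * 1 - 0 * 1) with t in W1 by ring. rewrite Rabs_right in W1 by lra.
  replace (t * 1 - lam q * 1) with (- (lam q - t)) in W2 by ring. rewrite Rabs_Ropp, Rabs_right in W2 by lra.
  lra.
Qed.

Definition Frame q (a b : vec) := exists M, InG q M /\ mapp M e1 = a /\ mapp M e2 = b.

Lemma frame_gen q A B M :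
  (forall v, mapp A (mapp B v) = v) ->
  (forall x y, wedge (mapp A x) y = wedge x (mapp B y)) ->
  (forall v, InLambda q v -> InLambda q (mapp B v)) ->
  (forall N, InG q N -> InG q (mmul A N)) ->
  (forall u1, InLambda q u1 -> wedge (mapp M (1,0)) u1 = 1 -> Frame q (mapp M (1,0)) u1) ->
  (forall u1, InLambda q u1 -> wedge (mapp A (mapp M (1,0))) u1 = 1 -> Frame q (mapp A (mapp M (1,0))) u1).
Proof.
  intros AB W LB GA IH u1 Hu1 Hw. rewrite W in Hw.
  destruct (IH (mapp B u1) (LB _ Hu1) Hw) as [N [HN [N1 N2]]].
  exists (mmul A N). split; auto. rewrite !mapp_mmul, N1, N2, AB. auto.
Qed.

Lemma frame_of q u0 u1 : (3 <= q)%nat -> InLambda q u0 -> InLambda q u1 -> wedge u0 u1 = 1 -> Frame q u0 u1.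
Proof.
  intros hq [M [HM ->]]. revert u1. induction HM.
  - intros u1 Hu1 Hw. replace (mapp matI (1,0)) with e1 in * by (unfold e1, mapp, matI; f_equal; ring).
    destruct u1 as [x y]. unfold wedge, e1 in Hw; simpl in Hw.
    assert (y = 1) by lra. subst y. destruct (claimY q x hq Hu1) as [k ->].
    destruct (Tpow_Z q k) as [M [HM [H1 H2]]]. exists M. auto.
  - intros. rewrite mapp_mmul in *. eapply frame_gen with (B := matSinv); eauto.
    + intros [x y]. unfold mapp, matS, matSinv. f_equal; ring.
    + intros [x y] [z w]. unfold mapp, matS, matSinv, wedge. simpl. ring.
    + apply Lam_Sinv.
    + intros; constructor; auto.
  - intros. rewrite mapp_mmul in *. eapply frame_gen with (B := matS); eauto.
    + intros [x y]. unfold mapp, matS, matSinv. f_equal; ring.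
    + intros [x y] [z w]. unfold mapp, matS, matSinv, wedge. simpl. ring.
    + apply Lam_S.
    + intros; constructor; auto.
  - intros. rewrite mapp_mmul in *. eapply frame_gen with (B := matTinv q); eauto.
    + intros [x y]. unfold mapp, matT, matTinv. f_equal; ring.
    + intros [x y] [z w]. unfold mapp, matT, matTinv, wedge. simpl. ring.
    + apply Lam_Tinv.
    + intros; constructor; auto.
  - intros. rewrite mapp_mmul in *. eapply frame_gen with (B := matT q); eauto.
    + intros [x y]. unfold mapp, matT, matTinv. f_equal; ring.
    + intros [x y] [z w]. unfold mapp, matT, matTinv, wedge. simpl. ring.
    + apply Lam_T.
    + intros; constructor; auto.
Qed.

Definition Adj (L : list vec) a b := exists l1 l2, L = l1 ++ a :: b :: l2.

Fixpoint chain (P : vec -> vec -> Prop) (L : list vec) : Prop :=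
  match L with
  | a :: ((b :: _) as r) => P a b /\ chain P r
  | _ => True
  end.

Lemma chain_app P X y Y : chain P (X ++ [y]) -> chain P (y :: Y) -> chain P (X ++ y :: Y).
Proof.
  induction X as [|x X IH]; intros H1 H2; [exact H2|].
  destruct X as [|x' X].
  - simpl in *. split; tauto.
  - change ((x :: x' :: X) ++ [y]) with (x :: ((x' :: X) ++ [y])) in H1.
    change ((x :: x' :: X) ++ y :: Y) with (x :: ((x' :: X) ++ y :: Y)).
    simpl in H1 |- *. destruct H1 as [H1 H3]. split; auto. apply IH; auto.
Qed.

Lemma chain_seq P (f : nat -> vec) k m :
  (forall j, (k <= j < k + m)%nat -> P (f j) (f (S j))) -> chain P (map f (seq k (S m))).
Proof.
  revert k. induction m as [|m IH]; intros k H; simpl; auto.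
  split. apply H; lia. apply (IH (S k)). intros; apply H; lia.
Qed.

Lemma chain_adj P L a b : chain P L -> Adj L a b -> P a b.
Proof.
  intros HC [l1 [l2 ->]]. induction l1 as [|x l1 IH]; simpl in *.
  - tauto.
  - apply IH. destruct l1; simpl in *; tauto.
Qed.

Lemma sbstep_split q v w r : (3 <= q)%nat -> exists t,
  sbstep q (v :: w :: r) = map (cj q v w) (seq 0 (q - 1)) ++ w :: t /\ sbstep q (w :: r) = w :: t.
Proof.
  intros hq. destruct (sbstep_first q w r hq) as [t Ht]. exists t. split; auto.
  rewrite sbstep_cons2, Ht. reflexivity.
Qed.

Lemma map_cj_q q v w : (3 <= q)%nat ->
  map (cj q v w) (seq 0 (q - 1)) ++ [w] = map (cj q v w) (seq 0 (S (q - 1))).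
Proof. intros hq. rewrite seq_S, map_app. simpl. rewrite cj_last by auto. reflexivity. Qed.

Lemma chain_sbstep q (P Q : vec -> vec -> Prop) L : (3 <= q)%nat ->
  (forall a b, P a b -> forall j, (j <= q - 2)%nat -> Q (cj q a b j) (cj q a b (S j))) ->
  chain P L -> chain Q (sbstep q L).
Proof.
  intros hq HPQ. induction L as [|v L IH]; [simpl; auto|].
  destruct L as [|w r]; [simpl; auto|].
  intros [H1 H2]. destruct (sbstep_split q v w r hq) as [t [E1 E2]]. rewrite E1.
  apply chain_app.
  - rewrite map_cj_q by auto. apply chain_seq. intros j Hj. apply HPQ; auto. lia.
  - rewrite <- E2. apply IH; auto.
Qed.

Lemma Adj_sbstep q L a b j : (3 <= q)%nat -> (j <= q - 2)%nat -> Adj L a b ->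
  Adj (sbstep q L) (cj q a b j) (cj q a b (S j)).
Proof.
  intros hq hj [l1 [l2 ->]]. rewrite sbstep_app.
  destruct (sbstep_split q a b l2 hq) as [t [E1 _]]. rewrite E1.
  replace (map (cj q a b) (seq 0 (q - 1)) ++ b :: t) with (map (cj q a b) (seq 0 (S (q - 1))) ++ t)
    by (rewrite <- map_cj_q by auto; rewrite <- app_assoc; reflexivity).
  replace (S (q - 1)) with (j + S (S (q - 2 - j)))%nat by lia.
  rewrite seq_app, map_app. simpl.
  exists (removelast (sbstep q (l1 ++ [a])) ++ map (cj q a b) (seq 0 j)).
  eexists. rewrite <- !app_assoc. simpl. reflexivity.
Qed.

Lemma Adj_in L a b : Adj L a b -> In a L /\ In b L.
Proof. intros [l1 [l2 ->]]. split; apply in_or_app; simpl; auto. Qed.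

Lemma new_elem q L p : In p (sbstep q L) ->
  In p L \/ exists a b j, Adj L a b /\ (1 <= j <= q - 2)%nat /\ p = cj q a b j.
Proof.
  induction L as [|v L IH]; [simpl; auto|].
  destruct L as [|w r]; [simpl; auto|].
  rewrite sbstep_cons2. intros H. apply in_app_or in H as [H|H].
  - rewrite block_eq in H. apply in_map_iff in H as [j [<- Hj]]. apply in_seq in Hj.
    destruct j as [|j].
    + left. rewrite cj_0. simpl; auto.
    + right. exists v, w, (S j). split; [exists [], r; reflexivity|]. split; [lia|reflexivity].
  - destruct (IH H) as [H1|[a [b [j [[l1 [l2 E]] H2]]]]].
    + left. simpl; auto.
    + right. exists a, b, j. split; auto. exists (v :: l1), l2. rewrite E. reflexivity.
Qed.

Lemma adj_of_in L p : In p L -> (2 <= length L)%nat -> exists a b, Adj L a b /\ (p = a \/ p = b).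
Proof.
  induction L as [|x L IH]; [simpl; tauto|].
  intros Hp Hl. destruct L as [|z L]; [simpl in Hl; lia|].
  destruct Hp as [E|Hp].
  - exists x, z. split; auto. exists [], L. reflexivity.
  - destruct L as [|z' L].
    + destruct Hp as [E|[]]. exists x, z. split; auto. exists [], []. reflexivity.
    + destruct (IH Hp ltac:(simpl; lia)) as [a [b [[l1 [l2 E]] H]]].
      exists a, b. split; auto. exists (x :: l1), l2. rewrite E. reflexivity.
Qed.

Lemma CL_len q n : (3 <= q)%nat -> (2 <= length (CL q n))%nat.
Proof.
  intros hq. unfold CL, SBlist. change (Nat.iter n (sbstep q)) with (it q n).
  destruct (it_first q n e1 [e2] hq) as [t Ht].
  destruct (it_last q n [e1] e2) as [t' Ht']. simpl app in Ht'.
  rewrite Ht. destruct t as [|z t]; simpl; [|lia].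
  rewrite Ht in Ht'. destruct t' as [|y t']; simpl in Ht'.
  - injection Ht' as H H'. lra.
  - injection Ht'. intros H _. destruct t'; discriminate.
Qed.

Definition sm (p : vec) := fst p + snd p.

Lemma wedge_comb a b p p' : wedge (comb a b p) (comb a b p') = wedge p p' * wedge a b.
Proof. destruct a, b, p, p'. unfold wedge, comb, vadd, vscale. simpl. ring. Qed.

Lemma wedge_Uj q j : wedge (Uj q j) (Uj q (S j)) = 1.
Proof.
  induction j as [|j IH].
  - rewrite Uj_1. change (Uj q 0) with (1, 0). unfold wedge. simpl. lra.
  - rewrite (Uj_succ q (S j)), (Uj_succ q j). rewrite (Uj_succ q j) in IH. rewrite <- IH.
    destruct (Uj q j) as [x y]. unfold wedge, mapp, matU, mmul, matT, matS. simpl. ring.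
Qed.

Lemma mapp_as_comb M p : mapp M p = comb (mapp M e1) (mapp M e2) p.
Proof. destruct M as [[a b][c d]], p. unfold mapp, comb, e1, e2, vadd, vscale. simpl. f_equal; ring. Qed.

Lemma cj_SS q a b j : cj q a b (S (S j)) = comb (cj q a b j) (cj q a b (S j)) (-1, lam q).
Proof.
  rewrite !cj_comb. rewrite comb_comb. f_equal.
  rewrite (Uj_succ q (S j)). rewrite (Uj_succ q j). destruct (Uj q j) as [x y].
  unfold comb, mapp, matU, mmul, matT, matS, vadd, vscale. simpl. f_equal; ring.
Qed.

Lemma G_T1 q : InG q (matT q).
Proof. replace (matT q) with (mmul (matT q) matI). repeat constructor.
  unfold mmul, matT, matI. f_equal; f_equal; ring. Qed.

Lemma G_ST q : InG q (mmul matS (matT q)).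
Proof. constructor. apply G_T1. Qed.

Lemma Frame_cj q a b : Frame q a b -> forall j, Frame q (cj q a b j) (cj q a b (S j)).
Proof.
  intros [M [HM [H1 H2]]]. induction j as [|j [N [HN [N1 N2]]]].
  - exists (mmul M (matT q)). split. apply InG_mmul; auto. apply G_T1.
    rewrite !mapp_mmul. rewrite cj_0. split.
    + rewrite <- H1. f_equal. unfold mapp, matT, e1. f_equal; ring.
    + rewrite (mapp_as_comb M), H1, H2, cj_comb, Uj_1. f_equal.
      unfold mapp, matT, e2. f_equal; ring.
  - exists (mmul N (mmul matS (matT q))). split. apply InG_mmul; auto. apply G_ST.
    rewrite !mapp_mmul. split.
    + rewrite <- N2. f_equal. unfold mapp, matS, matT, e1, e2. simpl. f_equal; ring.
    + rewrite cj_SS, <- N1, <- N2, (mapp_as_comb N (mapp matS (mapp (matT q) e2))).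
      f_equal. unfold mapp, matS, matT, e2. simpl. f_equal; ring.
Qed.

Definition PI q (n : nat) (a b : vec) : Prop :=
  Frame q a b /\ wedge a b = 1 /\ 0 <= fst a /\ 0 <= snd a /\ 0 <= fst b /\ 0 <= snd b /\
  1 <= fst a /\ 1 <= snd b /\ INR n + 2 <= sm a + sm b.

Lemma fst_cj q a b j : fst (cj q a b j) = xj q j * fst a + yj q j * fst b.
Proof. reflexivity. Qed.
Lemma snd_cj q a b j : snd (cj q a b j) = xj q j * snd a + yj q j * snd b.
Proof. reflexivity. Qed.

Lemma PI_step q n a b j : (3 <= q)%nat -> (j <= q - 2)%nat -> PI q n a b ->
  PI q (S n) (cj q a b j) (cj q a b (S j)).
Proof.
  intros hq hj [Fr [W [a1 [a2 [b1 [b2 [a3 [b3 Hs]]]]]]]].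
  pose proof (xj_ge0 q j hq ltac:(lia)) as x0. pose proof (xj_ge0 q (S j) hq ltac:(lia)) as x1.
  pose proof (yj_ge0 q j hq ltac:(lia)) as y0. pose proof (yj_ge0 q (S j) hq ltac:(lia)) as y1.
  pose proof (xj_ge1 q j hq ltac:(lia)) as x2. pose proof (yj_ge1 q (S j) hq ltac:(lia)) as y2.
  assert (Hab : 1 <= xj q (S j) + yj q j).
  { destruct j as [|j]. rewrite yj_0. pose proof (xj_ge1 q 1 hq ltac:(lia)). lra.
    pose proof (yj_ge1 q (S j) hq ltac:(lia)). lra. }
  unfold PI. split; [apply Frame_cj; auto|].
  split. { rewrite !cj_comb, wedge_comb, wedge_Uj, W. ring. }
  rewrite !fst_cj, !snd_cj. unfold sm. rewrite !fst_cj, !snd_cj. rewrite S_INR.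
  unfold sm in Hs.
  repeat split; try nra.
Qed.

Lemma CL_S q n : CL q (S n) = sbstep q (CL q n).
Proof. reflexivity. Qed.

Lemma chain_PI q n : (3 <= q)%nat -> chain (PI q n) (CL q n).
Proof.
  intros hq. induction n as [|n IH].
  - rewrite C0. simpl. split; auto. unfold PI. split.
    + exists matI. split. constructor. unfold mapp, matI, e1, e2. split; f_equal; ring.
    + unfold e1, e2, wedge, sm. simpl. repeat split; lra.
  - rewrite CL_S. apply chain_sbstep with (P := PI q n); auto.
    intros. apply PI_step; auto.
Qed.

Lemma PI_adj q n a b : (3 <= q)%nat -> Adj (CL q n) a b -> PI q n a b.
Proof. intros hq H. eapply chain_adj; eauto. apply chain_PI; auto. Qed.

Lemma disc (f : nat -> R) N : 0 <= f 0%nat -> f (S N) <= 0 ->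
  exists j, (j <= N)%nat /\ 0 <= f j /\ f (S j) <= 0.
Proof.
  induction N as [|N IH]; intros H0 H1.
  - exists 0%nat. auto.
  - destruct (Rle_dec 0 (f (S N))) as [h|h].
    + exists (S N). auto.
    + destruct (IH H0 ltac:(lra)) as [j [Hj H]]. exists j. split; auto.
Qed.

Definition cone (p a b : vec) := exists al be, 0 <= al /\ 0 <= be /\ p = vadd (vscale al a) (vscale be b).

Lemma subcone q p : (3 <= q)%nat -> 0 <= fst p -> 0 <= snd p ->
  exists j, (j <= q - 2)%nat /\ cone p (Uj q j) (Uj q (S j)).
Proof.
  intros hq h1 h2.
  destruct (disc (fun j => wedge (Uj q j) p) (q - 2)) as [j [Hj [F1 F2]]].
  - unfold Uj, wedge. simpl. lra.
  - replace (S (q - 2)) with (q - 1)%nat by lia. rewrite Uj_qm1 by auto. unfold e2, wedge. simpl. lra.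
  - exists j. split; auto. pose proof (wedge_Uj q j).
    exists (wedge p (Uj q (S j))), (wedge (Uj q j) p). split.
    + destruct p, (Uj q (S j)). unfold wedge in *. simpl in *. lra.
    + split; auto. destruct p, (Uj q j), (Uj q (S j)). unfold wedge, vadd, vscale in *. simpl in *.
      f_equal; nra.
Qed.

Lemma cone_comb a b p : cone p a b = cone p a b.
Proof. reflexivity. Qed.

Lemma coverage q p : (3 <= q)%nat -> 0 <= fst p -> 0 <= snd p ->
  forall n, exists a b, Adj (CL q n) a b /\ cone p a b.
Proof.
  intros hq h1 h2 n. induction n as [|n [a [b [Hab [al [be [A1 [B1 E]]]]]]]].
  - exists e1, e2. split. exists [], []. reflexivity.
    exists (fst p), (snd p). split; auto. split; auto. destruct p. unfold e1, e2, vadd, vscale. simpl. f_equal; ring.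
  - destruct (subcone q (al, be) hq A1 B1) as [j [Hj [al' [be' [A2 [B2 E2]]]]]].
    exists (cj q a b j), (cj q a b (S j)). split.
    + rewrite CL_S. apply Adj_sbstep; auto.
    + exists al', be'. split; auto. split; auto. rewrite E, !cj_comb.
      replace (vadd (vscale al a) (vscale be b)) with (comb a b (al, be)) by reflexivity.
      rewrite E2. apply comb_lin.
Qed.

Lemma new_sum q m p : (3 <= q)%nat -> In p (CL q (S m)) -> ~ In p (CL q m) -> INR (S m) + 1 <= sm p.
Proof.
  intros hq H1 H2. rewrite CL_S in H1. destruct (new_elem q _ p H1) as [H|[a [b [j [Hab [Hj ->]]]]]].
  - contradiction.
  - destruct (PI_adj q m a b hq Hab) as [_ [_ [a1 [a2 [b1 [b2 [a3 [b3 Hs]]]]]]]].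
    pose proof (xj_ge1 q j hq ltac:(lia)). pose proof (yj_ge1 q j hq ltac:(lia)).
    unfold sm in *. rewrite fst_cj, snd_cj. rewrite S_INR. nra.
Qed.

Lemma abs_le_norm v : Rabs (fst v) <= vnorm v /\ Rabs (snd v) <= vnorm v.
Proof.
  destruct v as [x y]. unfold vnorm. simpl. split.
  - rewrite <- sqrt_Rsqr_abs. apply sqrt_le_1_alt. unfold Rsqr. nra.
  - rewrite <- sqrt_Rsqr_abs. apply sqrt_le_1_alt. unfold Rsqr. nra.
Qed.

Lemma wedge_bound w u : Rabs (wedge w u) <= vnorm w * (Rabs (fst u) + Rabs (snd u)).
Proof.
  destruct (abs_le_norm w) as [H1 H2]. unfold wedge.
  pose proof (Rabs_pos (fst u)). pose proof (Rabs_pos (snd u)).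
  eapply Rle_trans. apply Rabs_triang. rewrite Rabs_Ropp, !Rabs_mult.
  pose proof (Rabs_pos (fst w)). pose proof (Rabs_pos (snd w)). nra.
Qed.

Lemma wedge_comb_l u0 u1 p : wedge (comb u0 u1 p) u1 = fst p * wedge u0 u1.
Proof. destruct u0, u1, p. unfold wedge, comb, vadd, vscale. simpl. ring. Qed.
Lemma wedge_comb_r u0 u1 p : wedge u0 (comb u0 u1 p) = snd p * wedge u0 u1.
Proof. destruct u0, u1, p. unfold wedge, comb, vadd, vscale. simpl. ring. Qed.

Lemma part3 q : (3 <= q)%nat -> forall (u0 u1 : vec) (w : nat -> vec),
     InLambda q u0 -> InLambda q u1 -> wedge u0 u1 = 1 ->
     (forall n, (1 <= n)%nat -> generated_at q u0 u1 n (w n)) ->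
     forall M : R, exists N : nat, forall n, (N <= n)%nat -> M < vnorm (w n).
Proof.
  intros hq u0 u1 w _ _ W Hg M.
  set (K := Rabs (fst u0) + Rabs (snd u0) + Rabs (fst u1) + Rabs (snd u1) + 1).
  assert (HK : 1 <= K) by (unfold K; pose proof (Rabs_pos (fst u0)); pose proof (Rabs_pos (snd u0));
    pose proof (Rabs_pos (fst u1)); pose proof (Rabs_pos (snd u1)); lra).
  destruct (archimed (M * K)) as [A1 _].
  exists (S (Z.to_nat (up (M * K)))). intros n Hn.
  destruct n as [|m]; [lia|].
  destruct (Hg (S m) ltac:(lia)) as [_ [I1 I2]].
  replace (S m - 1)%nat with m in I2 by lia.
  rewrite SBlist_comb in I1, I2. apply in_map_iff in I1 as [p [Ep Hp]].
  assert (Np : ~ In p (CL q m)) by (intros F; apply I2; apply in_map_iff; exists p; auto).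
  pose proof (new_sum q m p hq Hp Np) as Hs.
  assert (E1 : fst p = wedge (w (S m)) u1).
  { rewrite <- Ep, wedge_comb_l, W. ring. }
  assert (E2 : snd p = wedge u0 (w (S m))).
  { rewrite <- Ep, wedge_comb_r, W. ring. }
  pose proof (wedge_bound (w (S m)) u1). pose proof (wedge_bound (w (S m)) u0).
  assert (Rabs (wedge u0 (w (S m))) = Rabs (wedge (w (S m)) u0)).
  { rewrite <- Rabs_Ropp. f_equal. unfold wedge. ring. }
  assert (sm p <= Rabs (fst p) + Rabs (snd p)) by (unfold sm; pose proof (Rle_abs (fst p)); pose proof (Rle_abs (snd p)); lra).
  assert (Hv : 0 <= vnorm (w (S m))) by apply sqrt_pos.
  assert (INR (S m) + 1 <= vnorm (w (S m)) * K).
  { unfold K. rewrite E1, E2 in *. nra. }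
  assert (IZR (up (M * K)) <= INR (S m)).
  { destruct (Z_le_gt_dec 0 (up (M*K))) as [h|h].
    - rewrite <- (Z2Nat.id (up (M*K))) by lia. rewrite <- INR_IZR_INZ. apply le_INR. lia.
    - apply Rle_trans with 0. apply IZR_le; lia. apply pos_INR. }
  assert (M * K < vnorm (w (S m)) * K) by lra.
  apply Rmult_lt_reg_r with K; lra.
Qed.

Lemma Frame_Lam q a b : Frame q a b -> InLambda q a /\ InLambda q b.
Proof.
  intros [M [HM [H1 H2]]]. split.
  - exists M. split; auto.
  - exists (mmul M matS). split. apply InG_mmul; auto. replace matS with (mmul matS matI).
    repeat constructor. unfold mmul, matS, matI. f_equal; f_equal; ring.
    rewrite mapp_mmul, <- H2. f_equal. unfold mapp, matS, e2. f_equal; ring.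
Qed.

Definition rfl (M : mat) : mat := let '((a, b), (c, d)) := M in ((a, - b), (- c, d)).

Lemma InG_rfl q M : InG q M -> InG q (rfl M).
Proof.
  intros HM. induction HM.
  - replace (rfl matI) with matI. constructor. unfold rfl, matI. f_equal; f_equal; ring.
  - replace (rfl (mmul matS M)) with (mmul matSinv (rfl M)). constructor; auto.
    destruct M as [[a b][c d]]. unfold rfl, mmul, matS, matSinv. f_equal; f_equal; ring.
  - replace (rfl (mmul matSinv M)) with (mmul matS (rfl M)). constructor; auto.
    destruct M as [[a b][c d]]. unfold rfl, mmul, matS, matSinv. f_equal; f_equal; ring.
  - replace (rfl (mmul (matT q) M)) with (mmul (matTinv q) (rfl M)). constructor; auto.
    destruct M as [[a b][c d]]. unfold rfl, mmul, matT, matTinv. f_equal; f_equal; ring.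
  - replace (rfl (mmul (matTinv q) M)) with (mmul (matT q) (rfl M)). constructor; auto.
    destruct M as [[a b][c d]]. unfold rfl, mmul, matT, matTinv. f_equal; f_equal; ring.
Qed.

Lemma Lam_rfl q x y : InLambda q (x, y) -> InLambda q (x, - y).
Proof.
  intros [M [HM E]]. exists (rfl M). split. apply InG_rfl; auto.
  destruct M as [[a b][c d]]. unfold mapp in *. simpl in *. injection E; intros; subst. f_equal; ring.
Qed.

Lemma part4_pos q r eps : (3 <= q)%nat -> 0 < r -> 0 < eps ->
  exists x y : R, InLambda q (x, y) /\ x <> 0 /\ Rabs (y / x - r) < eps.
Proof.
  intros hq hr he.
  set (n := Z.to_nat (up (2 * (1 + r) ^ 2 / eps))).
  assert (Hn : 2 * (1 + r) ^ 2 / eps < INR n + 1).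
  { destruct (archimed (2 * (1 + r) ^ 2 / eps)) as [A1 _]. unfold n.
    destruct (Z_le_gt_dec 0 (up (2 * (1 + r) ^ 2 / eps))) as [h|h].
    - rewrite INR_IZR_INZ, Z2Nat.id by lia. lra.
    - assert (0 <= 2 * (1 + r) ^ 2 / eps). { apply Rmult_le_pos. nra. left; apply Rinv_0_lt_compat; lra. }
      assert (h2 : (up (2 * (1 + r) ^ 2 / eps) < 0)%Z) by lia. apply IZR_lt in h2. pose proof (pos_INR (Z.to_nat (up (2 * (1 + r) ^ 2 / eps)))). lra. }
  destruct (coverage q (1, r) hq ltac:(simpl; lra) ltac:(simpl; lra) n) as [a [b [Hab [al [be [A1 [B1 E]]]]]]].
  destruct (PI_adj q n a b hq Hab) as [Fr [W [a1 [a2 [b1 [b2 [a3 [b3 Hs]]]]]]]].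
  destruct (Frame_Lam q a b Fr) as [La Lb].
  assert (Hn' : 2*(1+r)^2 < eps*(INR n + 1)).
  { unfold Rdiv in Hn. apply Rmult_lt_compat_l with (r:=eps) in Hn; [|lra].
    replace (eps * (2*(1+r)^2 * /eps)) with (2*(1+r)^2) in Hn by (field; lra). exact Hn. }
  clear Hn.
  destruct a as [ax ay], b as [bx by']. unfold vadd, vscale, wedge, sm in *. cbn [fst snd] in *.
  injection E as Ex Ey.
  assert (Hsum : (ax + ay) * (bx + by') >= INR n + 1) by nra.
  assert (P1 : al * (ax + ay) <= 1 + r) by nra.
  assert (P2 : be * (bx + by') <= 1 + r) by nra.
  assert (Hab2 : al * be * (INR n + 1) <= (1 + r) ^ 2).
  { assert (al * be * ((ax + ay) * (bx + by')) <= (1 + r) ^ 2).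
    { replace (al * be * ((ax + ay) * (bx + by'))) with ((al * (ax + ay)) * (be * (bx + by'))) by ring.
      assert (0 <= al * (ax + ay)) by nra. assert (0 <= be * (bx + by')) by nra. nra. }
    assert (0 <= al * be) by nra. nra. }
  assert (Herr : 2 * al * be < eps).
  { assert (0 < INR n + 1) by (pose proof (pos_INR n); lra).
    apply Rmult_lt_reg_r with (INR n + 1); auto.
    apply Rle_lt_trans with (2 * (1 + r) ^ 2). replace (2 * al * be * (INR n + 1)) with (2 * (al * be * (INR n + 1))) by ring. lra.
    exact Hn'. }
  destruct (Rle_dec (1/2) (al * ax)) as [C1|C1].
  - exists ax, ay. split; auto. split; [lra|].
    assert (Ea : ay - r * ax = - be) by nra.
    replace (ay / ax - r) with ((ay - r * ax) / ax) by (field; lra). rewrite Ea.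
    unfold Rdiv. rewrite Rabs_mult, Rabs_Ropp, Rabs_right by lra.
    rewrite Rabs_right by (left; apply Rinv_0_lt_compat; lra).
    assert (/ ax <= 2 * al).
    { apply Rmult_le_reg_r with ax; [lra|]. rewrite Rinv_l by lra. lra. }
    nra.
  - assert (C2 : 1/2 <= be * bx) by lra.
    assert (0 < bx) by nra. assert (0 < be) by nra.
    exists bx, by'. split; auto. split; [lra|].
    assert (Eb : by' - r * bx = al) by nra.
    replace (by' / bx - r) with ((by' - r * bx) / bx) by (field; lra). rewrite Eb.
    unfold Rdiv. rewrite Rabs_mult, Rabs_right by lra.
    rewrite Rabs_right by (left; apply Rinv_0_lt_compat; lra).
    assert (/ bx <= 2 * be).
    { apply Rmult_le_reg_r with bx; [lra|]. rewrite Rinv_l by lra. lra. }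
    nra.
Qed.

Lemma part4 q : (3 <= q)%nat -> forall (r eps : R), 0 < eps ->
     exists x y : R, InLambda q (x, y) /\ x <> 0 /\ Rabs (y / x - r) < eps.
Proof.
  intros hq r eps he. destruct (Rtotal_order r 0) as [h|[h|h]].
  - destruct (part4_pos q (- r) eps hq ltac:(lra) he) as [x [y [H1 [H2 H3]]]].
    exists x, (- y). split. apply Lam_rfl; auto. split; auto.
    replace (- y / x - r) with (- (y / x - - r)) by (field; auto). rewrite Rabs_Ropp. auto.
  - exists 1, 0. split. apply Lam_e1. split. lra. subst. replace (0/1 - 0) with 0 by field.
    rewrite Rabs_R0. auto.
  - apply part4_pos; auto.
Qed.

Lemma grandchild_of q u0 u1 w n : In w (SBlist q u0 u1 n) -> ~ In w (SBlist q u0 u1 0) ->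
  grandchild q u0 u1 w.
Proof.
  induction n as [|n IH]; intros H1 H2; [contradiction|].
  destruct (classic (In w (SBlist q u0 u1 n))) as [h|h]; auto.
  exists (S n). split; [lia|]. split; auto. replace (S n - 1)%nat with n by lia. auto.
Qed.

Lemma comb_inj u0 u1 x y : wedge u0 u1 = 1 -> comb u0 u1 x = comb u0 u1 y -> x = y.
Proof.
  intros W E. assert (E1 := f_equal (fun z => wedge z u1) E). assert (E2 := f_equal (fun z => wedge u0 z) E).
  simpl in E1, E2. rewrite !wedge_comb_l, W in E1. rewrite !wedge_comb_r, W in E2.
  destruct x, y. simpl in *. f_equal; lra.
Qed.

Lemma Lam_mapp q N x : InG q N -> InLambda q x -> InLambda q (mapp N x).
Proof. intros HN [M [HM ->]]. exists (mmul N M). split. apply InG_mmul; auto. rewrite mapp_mmul; auto. Qed.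

Lemma part2 q : (3 <= q)%nat -> forall v u0 u1 : vec,
     v <> (0, 0) ->
     (forall u, InLambda q u -> ~ parallel v u) ->
     InLambda q u0 -> InLambda q u1 -> wedge u0 u1 = 1 ->
     in_open_cone u0 u1 v ->
     exists w0 w1 : vec,
       grandchild q u0 u1 w0 /\ grandchild q u0 u1 w1 /\
       wedge w0 w1 = 1 /\
       ~ ((w0 = u0 /\ w1 = u1) \/ (w0 = u1 /\ w1 = u0)) /\
       in_open_cone w0 w1 v.
Proof.
  intros hq v u0 u1 _ NP L0 L1 W [a [b [ha [hb Ev]]]].
  destruct (frame_of q u0 u1 hq L0 L1 W) as [N0 [HN0 [F1 F2]]].
  set (n := Z.to_nat (up (a / b + b / a))).
  assert (Hn : a / b + b / a < INR n).
  { destruct (archimed (a / b + b / a)) as [A1 _]. unfold n.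
    assert (0 < a / b) by (apply Rdiv_lt_0_compat; lra).
    assert (0 < b / a) by (apply Rdiv_lt_0_compat; lra).
    destruct (Z_le_gt_dec 0 (up (a / b + b / a))) as [h|h].
    - rewrite INR_IZR_INZ, Z2Nat.id by lia. lra.
    - assert (h2 : (up (a / b + b / a) < 0)%Z) by lia. apply IZR_lt in h2. lra. }
  assert (Hna : a < INR n * b).
  { assert (a / b * b = a) by (field; lra). assert (b / a * b >= 0) by (apply Rle_ge, Rmult_le_pos; [apply Rlt_le, Rdiv_lt_0_compat|]; lra).
    nra. }
  assert (Hnb : b < INR n * a).
  { assert (b / a * a = b) by (field; lra). assert (a / b * a >= 0) by (apply Rle_ge, Rmult_le_pos; [apply Rlt_le, Rdiv_lt_0_compat|]; lra).
    nra. }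
  clear Hn.
  destruct (coverage q (a, b) hq ltac:(simpl; lra) ltac:(simpl; lra) n) as [c [d [Hcd [al [be [A1 [B1 E]]]]]]].
  destruct (PI_adj q n c d hq Hcd) as [Fr [Wcd [c1 [c2 [d1 [d2 [c3 [d3 Hs]]]]]]]].
  destruct (Frame_Lam q c d Fr) as [Lc Ld].
  assert (Hcomb : forall p, comb u0 u1 p = mapp N0 p).
  { intros p. rewrite (mapp_as_comb N0), F1, F2. reflexivity. }
  assert (Ev' : v = comb u0 u1 (a, b)) by (rewrite Ev; reflexivity).
  assert (Ev2 : v = vadd (vscale al (comb u0 u1 c)) (vscale be (comb u0 u1 d))).
  { rewrite Ev', E. apply comb_lin. }
  assert (Lc' : InLambda q (comb u0 u1 c)) by (rewrite Hcomb; apply Lam_mapp; auto).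
  assert (Ld' : InLambda q (comb u0 u1 d)) by (rewrite Hcomb; apply Lam_mapp; auto).
  assert (Hal : 0 < al).
  { destruct A1 as [h|h]; auto. exfalso. apply (NP _ Ld'). exists be. rewrite Ev2, <- h.
    destruct (comb u0 u1 c), (comb u0 u1 d). unfold vadd, vscale. simpl. f_equal; ring. }
  assert (Hbe : 0 < be).
  { destruct B1 as [h|h]; auto. exfalso. apply (NP _ Lc'). exists al. rewrite Ev2, <- h.
    destruct (comb u0 u1 c), (comb u0 u1 d). unfold vadd, vscale. simpl. f_equal; ring. }
  destruct c as [cx cy], d as [dx dy]. unfold sm in Hs. cbn [fst snd] in *.
  injection E as Ea Eb.
  assert (Nc1 : (cx, cy) <> e1).
  { intros h. injection h as h1 h2. subst cx cy. unfold wedge in Wcd. cbn [fst snd] in Wcd.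
    assert (dy = 1) by lra. subst dy. nra. }
  assert (Nd2 : (dx, dy) <> e2).
  { intros h. injection h as h1 h2. subst dx dy. unfold wedge in Wcd. cbn [fst snd] in Wcd.
    assert (cx = 1) by lra. subst cx. nra. }
  assert (Nc2 : (cx, cy) <> e2) by (intros h; injection h; lra).
  assert (Nd1 : (dx, dy) <> e1) by (intros h; injection h; lra).
  assert (NotIn : forall p, p <> e1 -> p <> e2 -> ~ In (comb u0 u1 p) (SBlist q u0 u1 0)).
  { intros p h1 h2 [h|[h|[]]].
    - apply h1. apply (comb_inj u0 u1); auto. rewrite comb_e1. auto.
    - apply h2. apply (comb_inj u0 u1); auto. rewrite comb_e2. auto. }
  assert (Inc : In (comb u0 u1 (cx, cy)) (SBlist q u0 u1 n)).
  { rewrite SBlist_comb. apply in_map. apply (Adj_in _ _ _ Hcd). }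
  assert (Ind : In (comb u0 u1 (dx, dy)) (SBlist q u0 u1 n)).
  { rewrite SBlist_comb. apply in_map. apply (Adj_in _ _ _ Hcd). }
  exists (comb u0 u1 (cx, cy)), (comb u0 u1 (dx, dy)). split; [|split].
  - eapply grandchild_of; eauto.
  - eapply grandchild_of; eauto.
  - split.
    + rewrite wedge_comb, W, Wcd. ring.
    + split.
      * intros [[h _]|[h _]].
        -- apply Nc1. apply (comb_inj u0 u1); auto. rewrite comb_e1. auto.
        -- apply Nc2. apply (comb_inj u0 u1); auto. rewrite comb_e2. auto.
      * exists al, be. auto.
Qed.

Theorem mainTheorem3 (q : nat) (hq : (3 <= q)%nat) :
  (* (1) *)
  (forall v0 v1 : vec, InLambda q v0 -> InLambda q v1 ->
     v0 <> v1 -> v0 <> vneg v1 -> 1 <= Rabs (wedge v0 v1)) /\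
  (* (2) *)
  (forall v u0 u1 : vec,
     v <> (0, 0) ->
     (forall u, InLambda q u -> ~ parallel v u) ->
     InLambda q u0 -> InLambda q u1 -> wedge u0 u1 = 1 ->
     in_open_cone u0 u1 v ->
     exists w0 w1 : vec,
       grandchild q u0 u1 w0 /\ grandchild q u0 u1 w1 /\
       wedge w0 w1 = 1 /\
       ~ ((w0 = u0 /\ w1 = u1) \/ (w0 = u1 /\ w1 = u0)) /\
       in_open_cone w0 w1 v) /\
  (* (3) *)
  (forall (u0 u1 : vec) (w : nat -> vec),
     InLambda q u0 -> InLambda q u1 -> wedge u0 u1 = 1 ->
     (forall n, (1 <= n)%nat -> generated_at q u0 u1 n (w n)) ->
     forall M : R, exists N : nat, forall n, (N <= n)%nat -> M < vnorm (w n)) /\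
  (* (4) *)
  (forall (r eps : R), 0 < eps ->
     exists x y : R, InLambda q (x, y) /\ x <> 0 /\ Rabs (y / x - r) < eps).
Proof.
  split; [apply part1; auto|]. split; [apply part2; auto|]. split; [apply part3; auto|]. apply part4; auto.
Qed.
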